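(* For all integers $n\ge1$ and $0\le m\le n-1$, $$\sum_{j=0}^{m}\begin{bmatrix} n\\ m-j\end{bmatrix}_q\begin{bmatrix} n-m-1\\ j\end{bmatrix}_q q^{j^2}=\sum_{j=0}^{m}\begin{bmatrix} n-1\\ m-j\end{bmatrix}_q\begin{bmatrix} n-m\\ j\end{bmatrix}_q q^{j^2}.$$
   Context: Here $q$ is an indeterminate and for integers $a\ge0$ and $b$, $\begin{bmatrix} a\\ b\end{bmatrix}_q=\frac{(1-q^a)(1-q^{a-1})\cdots(1-q^{a-b+1})}{(1-q)(1-q^2)\cdots(1-q^b)}$ for $0\le b\le a$ and $0$ otherwise. *)

(* Defs.v *)
From HB Require Import structures.
From mathcomp Require Import all_boot all_order all_algebra fraction.
Set Implicit Arguments. Unset Strict Implicit. Unset Printing Implicit Defensive.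
Import Order.TTheory GRing.Theory Num.Theory.
Local Open Scope ring_scope.

(* The field of rational functions Q(q) over the integers: fractions of
   polynomials in the indeterminate q = 'X with integer coefficients. *)
Definition ratfun := {fraction {poly int}}.

Definition qX : ratfun := @FracField.tofrac {poly int} 'X.

(* Arguments are integers (a >= 0 is ensured in use). *)
Definition qbinom (a b : int) : ratfun :=
  if (0 <= b) && (b <= a) then
    (\prod_(i < `|b|%N) (1 - qX ^+ (`|a|%N - i)%N)) /
    (\prod_(i < `|b|%N) (1 - qX ^+ i.+1))
  else 0.

(* Main.v *)
Require Import Defs.
From HB Require Import structures.
From mathcomp Require Import all_boot all_order all_algebra.
From mathcomp Require Import fraction ring zify.
Import Order.TTheory GRing.Theory Num.Theory.
Local Open Scope ring_scope.

Definition PP (a b : nat) : ratfun := \prod_(i < b) (1 - qX ^+ (a - i)%N).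
Definition DD (b : nat) : ratfun := \prod_(i < b) (1 - qX ^+ i.+1).
Definition qb (a b : nat) : ratfun := PP a b / DD b.

Lemma nz1X k : (0 < k)%N -> 1 - qX ^+ k != 0.
Proof.
move=> k0; rewrite /qX -tofracXn -tofrac1 -tofracB tofrac_eq0 subr_eq0.
apply/eqP => /(congr1 (fun p : {poly int} => size p)).
by rewrite size_polyXn size_poly1; case: k k0.
Qed.

Lemma DD_nz b : DD b != 0.
Proof. by rewrite /DD; apply/prodf_neq0 => i _; apply: nz1X. Qed.

Lemma PPS a b : PP a b.+1 = PP a b * (1 - qX ^+ (a - b)%N).
Proof. by rewrite /PP big_ord_recr. Qed.

Lemma PPSS a b : PP a.+1 b.+1 = (1 - qX ^+ a.+1) * PP a b.
Proof. by rewrite /PP big_ord_recl subn0; congr (_ * _); apply: eq_bigr => i _. Qed.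

Lemma DDS b : DD b.+1 = DD b * (1 - qX ^+ b.+1).
Proof. by rewrite /DD big_ord_recr. Qed.

Lemma PP0 a b : (a < b)%N -> PP a b = 0.
Proof.
move=> ab; have -> : b = (a + (b - a).-1).+1 by lia.
elim: (b - a).-1 => [|k IH]; first by rewrite PPS addn0 subnn expr0 subrr mulr0.
by rewrite addnS PPS IH mul0r.
Qed.

Lemma qb0 a b : (a < b)%N -> qb a b = 0.
Proof. by move=> ab; rewrite /qb PP0 // mul0r. Qed.

Lemma qbn0 a : qb a 0 = 1.
Proof. by rewrite /qb /PP /DD !big_ord0 divr1. Qed.

Lemma pasc_gen (F:fieldType) (x y P D : F) : D != 0 -> 1 - y != 0 ->
  (1 - x*y)*P/(D*(1-y)) = P*(1-x)/(D*(1-y)) + x*(P/D).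
Proof. by move=> h1 h2; field; rewrite h1 h2. Qed.

Lemma key_gen (R : comRingType) (b1 b2 : bool) (a c d e u v z : R) :
  (a + (if b1 then u*c else 0))*d*z + (if b2 then v*z*a*e else 0) =
  a*(d + (if b2 then v*e else 0))*z + (if b1 then u*z*c*d else 0).
Proof. by case: b1; case: b2; ring. Qed.

Lemma pascal a b : qb a.+1 b.+1 = qb a b.+1 + qX ^+ (a - b)%N * qb a b.
Proof.
rewrite /qb PPSS PPS DDS.
case: (ltnP a b) => ab; first by rewrite PP0 // !(mulr0, mul0r, addr0).
have e : qX ^+ a.+1 = qX ^+ (a - b)%N * qX ^+ b.+1 by rewrite -exprD; congr (_ ^+ _); lia.
rewrite e; apply: pasc_gen; [exact: DD_nz | exact: nz1X].
Qed.

Lemma qbinomE (a b : nat) : qbinom a%:Z b%:Z = qb a b.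
Proof.
rewrite /qbinom /= lez_nat; case: ifP => ab //.
by rewrite qb0 // ltnNge ab.
Qed.

Theorem mainTheorem18 (n m : nat) (hn : (1 <= n)%N) (hm : (m <= n - 1)%N) :
  \sum_(0 <= j < m.+1)
     qbinom n%:Z (m%:Z - j%:Z) * qbinom (n%:Z - m%:Z - 1) j%:Z * qX ^+ (j * j)%N
  = \sum_(0 <= j < m.+1)
     qbinom (n%:Z - 1) (m%:Z - j%:Z) * qbinom (n%:Z - m%:Z) j%:Z * qX ^+ (j * j)%N.
Proof.
case: n hn hm => // n' _; rewrite subSS subn0 => hm.
set N := (n' - m)%N.
have e1 : n'.+1%:Z - m%:Z - 1 = N%:Z by rewrite /N; lia.
have e2 : n'.+1%:Z - 1 = n'%:Z by lia.
have e3 : n'.+1%:Z - m%:Z = N.+1%:Z by rewrite /N; lia.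
rewrite e1 e2 e3.
have eL : forall j, (0 <= j < m.+1)%N -> m%:Z - j%:Z = (m - j)%N%:Z by move=> j hj; lia.
rewrite (eq_big_nat _ _ (fun j hj => congr1 (fun x => qbinom n'.+1 x * qbinom N j * qX ^+ (j * j)) (eL j hj))).
rewrite (eq_big_nat _ _ (fun j hj => congr1 (fun x => qbinom n' x * qbinom N.+1 j * qX ^+ (j * j)) (eL j hj))).
rewrite /=.
under eq_bigr do rewrite !qbinomE.
under [in RHS]eq_bigr do rewrite !qbinomE.
pose A j := if (j < m)%N then qX ^+ (N + 1 + j) * qX ^+ (j * j) * qb n' (m - j).-1 * qb N j else 0.
pose B j := if (0 < j)%N then qX ^+ (N - j.-1) * qX ^+ (j * j) * qb n' (m - j) * qb N j.-1 else 0.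
have key : forall j, (0 <= j < m.+1)%N ->
  qb n'.+1 (m - j) * qb N j * qX ^+ (j * j) + B j =
  qb n' (m - j) * qb N.+1 j * qX ^+ (j * j) + A j.
  move=> j /andP [_ hj]; rewrite /A /B.
  have LL : qb n'.+1 (m - j) = qb n' (m - j) + (if (j < m)%N then qX ^+ (N + 1 + j) * qb n' (m - j).-1 else 0).
    case: ltnP => jm; last first.
      have -> : (m - j = 0)%N by lia.
      by rewrite !qbn0 addr0.
    have -> : (m - j = (m - j).-1.+1)%N by lia.
    rewrite pascal /=; congr (_ + _ ^+ _ * _); lia.
  have RR : qb N.+1 j = qb N j + (if (0 < j)%N then qX ^+ (N - j.-1) * qb N j.-1 else 0).
    by case: j {hj LL} => [|j']; [rewrite !qbn0 addr0 | rewrite pascal].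
  by rewrite LL RR key_gen.
have sAB : \sum_(0 <= j < m.+1) A j = \sum_(0 <= j < m.+1) B j.
  have hA : A m = 0 by rewrite /A ltnn.
  have hB : B 0%N = 0 by [].
  rewrite big_nat_recr //= big_nat_recl //= hA hB addr0 add0r.
  apply: eq_big_nat => j /andP [_ hj]; rewrite /A /B hj /=.
  case: (leqP j N) => jN; last by rewrite (@qb0 N j jN) !mulr0.
  have -> : (m - j.+1 = (m - j).-1)%N by lia.
  rewrite -!exprD; congr (_ ^+ _ * _ * _); nia.
apply: (addIr (\sum_(0 <= j < m.+1) B j)).
rewrite -{2}sAB -!big_split /=.
exact: eq_big_nat.
Qed.
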